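(* Consider the algorithm $\mathcal{S}$-DC on the half-line $[0,\infty)$ with source $0$ and speeds $(s_i)_{i\ge2}$. Let $x_1\ge x_2\ge\dots$ be the positions of its servers after serving a sequence of requests (with $x_i$ the $i$-th server from the right, servers at the source having position $0$). Then the total cost paid by $\mathcal{S}$-DC is $\sum_{i=1}^\infty z_i x_i$, where $z_1=1$ and $z_i=\frac{z_{i-1}}{s_i}+1+\frac{1}{s_i}$ for $i\ge2$.
   Context: Infinite server problem on the half-line $[0,\infty)$ with source $0$: an unbounded number of servers initially reside at $0$; requests (points of $[0,\infty)$) are revealed one by one and must be served immediately by moving a server to the request; the cost is the total distance traveled. Let $\mathcal{S}=\{s_i\ge1 : i\in\mathbb{N}, i\ge2\}$ be given by a monotonic (non-decreasing or non-increasing) sequence of speeds $s_i\ge1$. Denote by $x_i$ the $i$-th server from the right (also its position). Algorithm $\mathcal{S}$-DC: if a request lies between servers $x_{i+1}$ (to its left) and $x_i$ (to its right), move $x_{i+1}$ and $x_i$ towards it with speeds $s_{i+1}$ and $1$ respectively until one of them reaches it; if there is no server to the right of the request, move the rightmost server to the request. (With all $s_i=1$ this is the Double Coverage algorithm.) *)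

(* Defs.v *)
From Stdlib Require Import Reals Lra List.
From Coquelicot Require Import Coquelicot.
Open Scope R_scope.

(* A configuration is x : nat -> R where x i (i >= 1) is the position of the
   i-th server from the right; x 0 is unused.  Initially all servers at 0. *)
Definition config := nat -> R.

Definition upd (x : config) (i : nat) (v : R) : config :=
  fun j => if Nat.eqb j i then v else x j.

(* Time for which x_{i+1} (speed s_{i+1}) and x_i (speed 1) move towards r
   until one of them reaches r. *)
Definition dc_time (s : nat -> R) (x : config) (i : nat) (r : R) : R :=
  Rmin ((r - x (S i)) / s (S i)) (x i - r).

Inductive dc_step (s : nat -> R) (x : config) (r : R) : config -> R -> Prop :=
| dc_step_right :
    x 1%nat < r -> dc_step s x r (upd x 1 r) (r - x 1%nat)
| dc_step_hit : forall j : nat,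
    (1 <= j)%nat -> x j = r -> dc_step s x r x 0
| dc_step_between : forall i : nat,
    (1 <= i)%nat -> x (S i) < r -> r < x i ->
    dc_step s x r
      (upd (upd x i (x i - dc_time s x i r)) (S i)
           (x (S i) + s (S i) * dc_time s x i r))
      ((s (S i) + 1) * dc_time s x i r).

Inductive dc_run (s : nat -> R) : list R -> config -> R -> Prop :=
| dc_run_nil : dc_run s nil (fun _ => 0) 0
| dc_run_snoc : forall rs x c r x' c',
    dc_run s rs x c -> dc_step s x r x' c' ->
    dc_run s (rs ++ r :: nil) x' (c + c').

(* zc s n = z_{n+1}:  z_1 = 1, z_i = z_{i-1}/s_i + 1 + 1/s_i. *)
Fixpoint zc (s : nat -> R) (n : nat) : R :=
  match n with
  | O => 1
  | S m => zc s m / s (S (S m)) + 1 + 1 / s (S (S m))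
  end.

(* Main.v *)
Require Import Defs.
From Stdlib Require Import Reals List Lra Lia Arith.
From Coquelicot Require Import Coquelicot.
Open Scope R_scope.

Lemma delta_sum (n : nat) (d : R) (m : nat) : (n <= m)%nat ->
  sum_n (fun k => if Nat.eqb k n then d else 0) m = d.
Proof.
  induction 1.
  - destruct n.
    + rewrite sum_O. reflexivity.
    + rewrite sum_Sn. rewrite Nat.eqb_refl.
      assert (H : forall p, (p <= n)%nat -> sum_n (fun k => if Nat.eqb k (S n) then d else 0) p = 0).
      { induction p; intros Hp.
        - rewrite sum_O. reflexivity.
        - rewrite sum_Sn, IHp by lia.
          destruct (Nat.eqb_spec (S p) (S n)); [lia|]. unfold plus; simpl. ring. }
      rewrite H by lia. unfold plus; simpl. ring.
  - rewrite sum_Sn, IHle. destruct (Nat.eqb_spec (S m) n); [lia|].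
    unfold plus; simpl. ring.
Qed.

Lemma delta_series (n : nat) (d : R) :
  is_series (fun k => if Nat.eqb k n then d else 0) d.
Proof.
  change (is_lim_seq (sum_n (fun k => if Nat.eqb k n then d else 0)) d).
  apply is_lim_seq_ext_loc with (u := fun _ => d).
  - exists n. intros m Hm. symmetry. apply delta_sum. exact Hm.
  - apply is_lim_seq_const.
Qed.

Lemma series_bump (f : nat -> R) (l : R) (n : nat) (d : R) :
  is_series f l ->
  is_series (fun k => if Nat.eqb k n then f k + d else f k) (l + d).
Proof.
  intro H.
  eapply is_series_ext; [|apply (is_series_plus _ _ _ _ H (delta_series n d))].
  intro k; cbv beta. simpl. unfold plus; simpl. destruct (Nat.eqb k n); ring.
Qed.

Lemma series_zero : is_series (fun _ : nat => 0) 0.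
Proof.
  change (is_lim_seq (sum_n (fun _ : nat => 0)) 0).
  apply is_lim_seq_ext with (u := fun _ => 0).
  - intro m. induction m. rewrite sum_O; reflexivity.
    rewrite sum_Sn, <- IHm. unfold plus; simpl; ring.
  - apply is_lim_seq_const.
Qed.

Lemma extR (a b : nat -> R) (l : R) :
  (forall n, a n = b n) -> is_series a l -> is_series b l.
Proof. apply is_series_ext. Qed.

Theorem lemma1 (s : nat -> R)
  (Hs : forall i : nat, (2 <= i)%nat -> 1 <= s i)
  (Hmono : (forall i : nat, (2 <= i)%nat -> s i <= s (S i)) \/
           (forall i : nat, (2 <= i)%nat -> s (S i) <= s i))
  (rs : list R) (x : config) (c : R) :
  List.Forall (fun r => 0 <= r) rs ->
  dc_run s rs x c ->
  is_series (fun n : nat => zc s n * x (S n)) c.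
Proof.
  intros _ Hrun. induction Hrun as [|rs x c r x' c' Hrun IH Hstep].
  - eapply extR; [|apply series_zero]. intro n; simpl; symmetry; apply Rmult_0_r.
  - destruct Hstep as [Hr | j Hj Hx | i Hi H1 H2].
    + eapply extR; [|apply (series_bump _ _ 0 (r - x 1%nat) IH)].
      intro k; cbv beta. unfold upd. destruct k; simpl; [ring|].
      reflexivity.
    + eapply extR; [|apply (series_bump _ _ 0 0 IH)].
      intro k; cbv beta. case (k =? 0)%nat; [apply Rplus_0_r|reflexivity].
    + destruct i as [|m]; [lia|].
      set (t := dc_time s x (S m) r).
      assert (Hsp : 1 <= s (S (S m))) by (apply Hs; lia).
      pose proof (series_bump _ _ (S m) (zc s (S m) * (s (S (S m)) * t))
                   (series_bump _ _ m (- (zc s m * t)) IH)) as H.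
      replace (c + (s (S (S m)) + 1) * t) with
        (c + - (zc s m * t) + zc s (S m) * (s (S (S m)) * t)).
      2:{ simpl. field. lra. }
      eapply extR; [|apply H].
      intro k; cbv beta. unfold upd.
      destruct (Nat.eqb_spec k (S m)) as [->|Hk1].
      * rewrite Nat.eqb_refl. destruct (Nat.eqb_spec (S m) m); [lia|].
        destruct (Nat.eqb_spec (S (S m)) (S m)); [lia|]. ring.
      * destruct (Nat.eqb_spec (S k) (S (S m))); [lia|].
        destruct (Nat.eqb_spec k m) as [->|Hk2].
        -- rewrite Nat.eqb_refl. ring.
        -- destruct (Nat.eqb_spec (S k) (S m)); [lia|]. reflexivity.
Qed.
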